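(* Let $\gamma\in C^0(\mathbb{R}/\ell\mathbb{Z},\mathbb{R}^3)$ be a closed curve of length $\Lambda\in(0,\infty)$ whose image is invariant under $R_1$, $R_2$ and $R_3$ (i.e. $R_i\gamma(\mathbb{R}/\ell\mathbb{Z})=\gamma(\mathbb{R}/\ell\mathbb{Z})$ for $i=1,2,3$). Then $\gamma(\mathbb{R}/\ell\mathbb{Z})$ is contained in the closed ball of radius $\Lambda/4$ centered at the origin.
   Context: $R_1=\mathrm{diag}(1,-1,-1)$, $R_2=\mathrm{diag}(-1,1,-1)$, $R_3=\mathrm{diag}(-1,-1,1)$ are the rotations by angle $\pi$ about the coordinate axes of $\mathbb{R}^3$. *)

(* Defs.v *)
From HB Require Import structures.
From mathcomp Require Import all_boot all_order all_algebra.
From mathcomp Require Import all_classical all_reals all_analysis.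
Set Implicit Arguments. Unset Strict Implicit. Unset Printing Implicit Defensive.
Import Order.TTheory GRing.Theory Num.Theory.
Import numFieldNormedType.Exports.
Local Open Scope ring_scope.
Local Open Scope classical_set_scope.

Section Defs.
Variable R : realType.

Definition enorm3 (p : 'cV[R]_3) : R := Num.sqrt (\sum_(i < 3) p i 0 ^+ 2).
Definition edist3 (p q : 'cV[R]_3) : R := enorm3 (p - q).

(* The rotations by pi about the coordinate axes: R_k = diag(...) with +1 at k. *)
Definition Rk (k : 'I_3) : 'M[R]_3 :=
  diag_mx (\row_(i < 3) (if i == k then 1 else -1)).
Definition R1 : 'M[R]_3 := Rk 0.
Definition R2 : 'M[R]_3 := Rk 1.
Definition R3 : 'M[R]_3 := Rk 2%:R.

Definition is_partition (l : R) (n : nat) (t : nat -> R) : Prop :=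
  t 0%N = 0 /\ t n = l /\ (forall k, (k < n)%N -> t k <= t k.+1).

Definition polygon_sum (g : R -> 'cV[R]_3) (n : nat) (t : nat -> R) : R :=
  \sum_(k < n) edist3 (g (t k.+1)) (g (t k)).

(* The length (total variation) of g over one period [0, l] is Lam:
   Lam is the supremum of the lengths of inscribed polygons. *)
Definition curve_length_is (g : R -> 'cV[R]_3) (l Lam : R) : Prop :=
  (forall n t, is_partition l n t -> polygon_sum g n t <= Lam) /\
  (forall e, 0 < e -> exists n t, is_partition l n t /\ Lam - e < polygon_sum g n t).

(* The image of the closed curve R/lZ -> R^3 (g is l-periodic) *)
Definition curve_image (g : R -> 'cV[R]_3) : set 'cV[R]_3 := range g.

Definition invariant_under (M : 'M[R]_3) (S : set 'cV[R]_3) : Prop :=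
  [set M *m p | p in S] = S.

End Defs.

(* Main.v *)
Require Import Defs.
From HB Require Import structures.
From mathcomp Require Import all_boot all_order all_algebra.
From mathcomp Require Import all_classical all_reals all_analysis.
From mathcomp Require Import ring lra.
Import Order.TTheory GRing.Theory Num.Theory.
Import numFieldNormedType.Exports.
Local Open Scope ring_scope.
Local Open Scope classical_set_scope.

Section H.
Variable R : realType.
Implicit Types p q r : 'cV[R]_3.

Lemma enorm3E p : enorm3 p = Num.sqrt (p 0 0 ^+ 2 + p 1 0 ^+ 2 + p 2%:R 0 ^+ 2).
Proof. rewrite /enorm3 !big_ord_recr big_ord0 /= add0r. by congr (Num.sqrt (p _ 0 ^+ 2 + p _ 0 ^+ 2 + p _ 0 ^+ 2)); apply/val_inj. Qed.

Lemma enorm3_tri p q : enorm3 (p + q) <= enorm3 p + enorm3 q.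
Proof.
rewrite !enorm3E !mxE.
set a0 := p 0 0; set a1 := p 1 0; set a2 := p 2%:R 0.
set b0 := q 0 0; set b1 := q 1 0; set b2 := q 2%:R 0.
set A := a0 ^+ 2 + a1 ^+ 2 + a2 ^+ 2; set B := b0 ^+ 2 + b1 ^+ 2 + b2 ^+ 2.
have A0 : 0 <= A by rewrite /A; nra.
have B0 : 0 <= B by rewrite /B; nra.
have sA := sqr_sqrtr A0; have sB := sqr_sqrtr B0.
have pA := sqrtr_ge0 A; have pB := sqrtr_ge0 B.
set sa := Num.sqrt A in sA pA *; set sb := Num.sqrt B in sB pB *.
have CS : (a0*b0 + a1*b1 + a2*b2) ^+ 2 <= (sa * sb) ^+ 2.
  rewrite exprMn sA sB /A /B.
  have h : 0 <= (a0*b1 - a1*b0)^+2 + (a0*b2-a2*b0)^+2 + (a1*b2-a2*b1)^+2 by rewrite !addr_ge0 // sqr_ge0.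
  rewrite -subr_ge0; apply: (le_trans h); rewrite le_eqVlt; apply/orP; left; apply/eqP; ring.
have CS' : a0*b0 + a1*b1 + a2*b2 <= sa * sb.
  have h0 : 0 <= sa * sb by exact: mulr_ge0.
  nra.
rewrite -(ger0_norm (addr_ge0 pA pB)) -sqrtr_sqr.
apply: ler_wsqrtr.
have -> : (a0 + b0) ^+ 2 + (a1 + b1) ^+ 2 + (a2 + b2) ^+ 2 = A + B + 2 * (a0*b0 + a1*b1 + a2*b2) by rewrite /A /B; ring.
rewrite sqrrD sA sB; lra.
Qed.

Lemma enorm3N p : enorm3 (- p) = enorm3 p.
Proof. by rewrite !enorm3E !mxE !sqrrN. Qed.

Lemma edist3C p q : edist3 p q = edist3 q p.
Proof. by rewrite /edist3 -enorm3N opprB. Qed.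

Lemma edist3_tri p q r : edist3 p r <= edist3 p q + edist3 q r.
Proof. rewrite /edist3 (_ : p - r = (p - q) + (q - r)); first exact: enorm3_tri. by rewrite addrA subrK. Qed.

Lemma RkE k p i : (Rk R k *m p) i 0 = (if i == k then 1 else -1) * p i 0.
Proof. by rewrite /Rk mul_diag_mx mxE mxE. Qed.


Definition perim p q r := edist3 p q + edist3 q r + edist3 r p.

Lemma perimC1 p q r : perim p q r = perim q p r.
Proof. rewrite /perim (edist3C p q) (edist3C q r) (edist3C r p); lra. Qed.
Lemma perimC2 p q r : perim p q r = perim p r q.
Proof. rewrite /perim (edist3C p q) (edist3C q r) (edist3C r p); lra. Qed.

Variables (l Lam : R) (g : R -> 'cV[R]_3).
Hypothesis gper : forall t, g (t + l) = g t.
Hypothesis glen : curve_length_is g l Lam.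

Lemma per_nat x n : g (x + n%:R * l) = g x.
Proof.
elim: n => [|n IH]; first by rewrite mul0r addr0.
by rewrite mulrSr mulrDl mul1r addrA gper.
Qed.

Lemma per_int x (k : int) : g (x + k%:~R * l) = g x.
Proof.
case: k => n; first exact: per_nat.
by rewrite NegzE mulrNz mulNr -(per_nat (x - n.+1%:R * l) n.+1) subrK.
Qed.

Lemma reduce t : 0 < l -> exists t', 0 <= t' <= l /\ g t' = g t.
Proof.
move=> l0; exists (t + (- Num.floor (t / l))%:~R * l); split; last exact: per_int.
have := floor_itv (t / l); set k := Num.floor (t / l).
rewrite intrD mulrNz mulNr => /andP [h1 h2].
have e : t = (t / l) * l by rewrite divfK // gt_eqF.
rewrite ler_pdivlMr // in h1; rewrite ltr_pdivrMr // in h2.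
apply/andP; split; nra.
Qed.

Lemma sorted3 s t u : 0 <= s -> s <= t -> t <= u -> u <= l ->
  perim (g s) (g t) (g u) <= Lam.
Proof.
move=> h1 h2 h3 h4.
pose tt := fun k : nat => match k with 0 => 0 | 1 => s | 2 => t | 3 => u | _ => l end.
have P : is_partition l 4 tt.
  split => //; split => //; case=> [|[|[|[|k]]]] //.
have := glen.1 4%N tt P.
rewrite /polygon_sum !big_ord_recr big_ord0 /= add0r.
have e : g l = g 0 by rewrite -[l]add0r gper.
rewrite e /perim.
have := edist3_tri (g u) (g 0) (g s).
rewrite (edist3C (g 0) (g u)) (edist3C (g t) (g s)) (edist3C (g u) (g t)) (edist3C (g 0) (g s)).
lra.
Qed.

Lemma any3 s t u : 0 <= s <= l -> 0 <= t <= l -> 0 <= u <= l ->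
  perim (g s) (g t) (g u) <= Lam.
Proof.
move=> /andP[s0 s1] /andP[t0 t1] /andP[u0 u1].
have [st|ts] := leP s t; have [tu|ut] := leP t u; have [su|us] := leP s u.
all: first [ apply: sorted3; lra | rewrite perimC2; apply: sorted3; lra | rewrite perimC1; apply: sorted3; lra | rewrite perimC1 perimC2; apply: sorted3; lra | rewrite perimC2 perimC1; apply: sorted3; lra | rewrite perimC1 perimC2 perimC1; apply: sorted3; lra ].
Qed.

End H.
Lemma sq_le (R : realType) (a c : R) : 0 <= a -> 0 <= c -> c ^+ 2 <= a ^+ 2 -> c <= a.
Proof. move=> a0 c0 h; nra. Qed.

Lemma geo0 (R : realType) (x y z : R) :
  4 * Num.sqrt (x ^+ 2 + y ^+ 2 + z ^+ 2) <=
  Num.sqrt (4 * x ^+ 2 + 4 * y ^+ 2) + Num.sqrt (4 * x ^+ 2 + 4 * z ^+ 2)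
  + Num.sqrt (4 * y ^+ 2 + 4 * z ^+ 2).
Proof.
have S0 : 0 <= x ^+ 2 + y ^+ 2 + z ^+ 2 by rewrite !addr_ge0 // sqr_ge0.
have U0 : 0 <= 4 * x ^+ 2 + 4 * y ^+ 2 by rewrite !addr_ge0 // mulr_ge0 // sqr_ge0.
have V0 : 0 <= 4 * x ^+ 2 + 4 * z ^+ 2 by rewrite !addr_ge0 // mulr_ge0 // sqr_ge0.
have W0 : 0 <= 4 * y ^+ 2 + 4 * z ^+ 2 by rewrite !addr_ge0 // mulr_ge0 // sqr_ge0.
have sS := sqr_sqrtr S0; have sU := sqr_sqrtr U0; have sV := sqr_sqrtr V0; have sW := sqr_sqrtr W0.
have pS := sqrtr_ge0 (x ^+ 2 + y ^+ 2 + z ^+ 2).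
have pU := sqrtr_ge0 (4 * x ^+ 2 + 4 * y ^+ 2).
have pV := sqrtr_ge0 (4 * x ^+ 2 + 4 * z ^+ 2).
have pW := sqrtr_ge0 (4 * y ^+ 2 + 4 * z ^+ 2).
move: sS sU sV sW pS pU pV pW.
set s := Num.sqrt (x ^+ 2 + _ + _); set u := Num.sqrt (4 * x ^+ 2 + 4 * y ^+ 2); set v := Num.sqrt (4 * x ^+ 2 + 4 * z ^+ 2); set w := Num.sqrt (4 * y ^+ 2 + _).
move=> sS sU sV sW pS pU pV pW.
have x2 := sqr_ge0 x; have y2 := sqr_ge0 y; have z2 := sqr_ge0 z.
have uv : 4 * x ^+ 2 <= u * v.
  apply: sq_le; [exact: mulr_ge0 | nra |].
  rewrite [(_ * _) ^+ 2 in X in _ <= X]exprMn sU sV; nra.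
have uw : 4 * y ^+ 2 <= u * w.
  apply: sq_le; [exact: mulr_ge0 | nra |].
  rewrite [(_ * _) ^+ 2 in X in _ <= X]exprMn sU sW; nra.
have vw : 4 * z ^+ 2 <= v * w.
  apply: sq_le; [exact: mulr_ge0 | nra |].
  rewrite [(_ * _) ^+ 2 in X in _ <= X]exprMn sV sW; nra.
apply: sq_le; [nra | nra |].
nra.
Qed.

Lemma geo (R : realType) (p : 'cV[R]_3) :
  4 * enorm3 p <= perim R (R1 R *m p) (R2 R *m p) p.
Proof.
rewrite /perim /edist3 /R1 /R2 !enorm3E !(RkE, mxE) /=.
set x := p 0 0; set y := p 1 0; set z := p 2%:R 0.
apply: le_trans (@geo0 R x y z) _.
rewrite le_eqVlt; apply/orP; left; apply/eqP; congr (Num.sqrt _ + Num.sqrt _ + Num.sqrt _); ring.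
Qed.

Theorem lemma3p13 (R : realType) (l Lam : R) (g : R -> 'cV[R]_3) :
  0 < l ->
  continuous g ->
  (forall t, g (t + l) = g t) ->
  0 < Lam ->
  curve_length_is g l Lam ->
  invariant_under (R1 R) (curve_image g) ->
  invariant_under (R2 R) (curve_image g) ->
  invariant_under (R3 R) (curve_image g) ->
  forall p, curve_image g p -> enorm3 p <= Lam / 4.
Proof.
move=> l0 _ gper _ glen I1 I2 _ p [t _ <-].
have im M : invariant_under M (curve_image g) -> curve_image g (M *m g t).
  by move=> <-; exists (g t) => //; exists t.
have pt M : curve_image g M -> exists t', 0 <= t' <= l /\ g t' = M.
  by move=> [s _ <-]; exact: (reduce _ _ _ gper).
have [t1 [h1 e1]] := pt _ (im _ I1).
have [t2 [h2 e2]] := pt _ (im _ I2).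
have [t0 [h0 e0]] := pt (g t) (ex_intro2 _ _ t I (erefl _)).
have := any3 _ _ _ _ gper glen _ _ _ h1 h2 h0.
rewrite e1 e2 e0 => H.
have := @geo R (g t).
lra.
Qed.
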